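(* Let $\alpha,\beta$ be relatively prime positive integers. For an integer $t\ge2$, let $n_t=\beta g_tg_{t+1}$, $a_t=(\beta-1)g_{t+1}+\alpha g_t$, and $b_t=g_t$. Then $a(n_t)=a_t$, $b(n_t)=b_t$, and $t(n_t)=t$.
   Context: For positive integers $a_1,a_2$, the $(\alpha,\beta)$-walk $w_k(a_1,a_2)$ is given by $w_1=a_1$, $w_2=a_2$, $w_{k+2}=\alpha w_{k+1}+\beta w_k$ ($k\ge1$). For a positive integer $n$, $s(n;a_1,a_2)$ is the (largest) index $s$ with $w_s(a_1,a_2)=n$ ($-\infty$ if none), and $s(n)=\max_{a_1,a_2\ge1}s(n;a_1,a_2)$. The sequence $g_k$: $g_1=1$, $g_2=\alpha$, $g_{k+2}=\alpha g_{k+1}+\beta g_k$. For $n$ with $s(n)>2$, $a(n),b(n),t(n)$ denote the unique integers $a,b,t$ (which the paper proves exist) with $n=ag_t+\beta bg_{t-1}$, $t\ge2$, $a\le(\beta-1)g_{t+1}+\alpha b$, $b\le g_t$, and such that $a-\alpha b-\ell g_{t+1}$ is not a positive multiple of $\beta$ for any integer $\ell\ge0$. (The conclusion includes that $s(n_t)>2$, so these quantities are defined for $n_t$.) *)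

(* Defs.v *)
From Stdlib Require Import ZArith Lia.
Open Scope Z_scope.

Fixpoint lin2 (alpha beta x0 x1 : Z) (k : nat) : Z * Z :=
  match k with
  | O => (x0, x1)
  | S k' => let p := lin2 alpha beta x0 x1 k' in (snd p, alpha * snd p + beta * fst p)
  end.

(* g_0 = 0 (auxiliary, consistent with the recurrence), g_1 = 1, g_2 = alpha,
   g_{k+2} = alpha g_{k+1} + beta g_k. *)
Definition gseq (alpha beta : Z) (k : nat) : Z := fst (lin2 alpha beta 0 1 k).

(* The (alpha,beta)-walk, 1-indexed: w_1 = a1, w_2 = a2,
   w_{k+2} = alpha w_{k+1} + beta w_k.  (Index 0 is not used: walk .. 0 = a1 too.) *)
Definition walk (alpha beta a1 a2 : Z) (k : nat) : Z :=
  fst (lin2 alpha beta a1 a2 (Nat.pred k)).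

Lemma gseq_1 a b : gseq a b 1 = 1. Proof. reflexivity. Qed.
Lemma gseq_2 a b : gseq a b 2 = a. Proof. unfold gseq; simpl; ring. Qed.
Lemma gseq_SS a b k : gseq a b (S (S k)) = a * gseq a b (S k) + b * gseq a b k.
Proof. reflexivity. Qed.
Lemma walk_1 a b x y : walk a b x y 1 = x. Proof. reflexivity. Qed.
Lemma walk_2 a b x y : walk a b x y 2 = y. Proof. reflexivity. Qed.
Lemma walk_SSS a b x y k :
  walk a b x y (S (S (S k))) = a * walk a b x y (S (S k)) + b * walk a b x y (S k).
Proof. reflexivity. Qed.

(* s(n) > m : some walk with positive starting values a1,a2 hits n at an index s > m,
   i.e. max_{a1,a2>=1} s(n;a1,a2) > m. *)
Definition s_gt (alpha beta n : Z) (m : nat) : Prop :=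
  exists a1 a2 : Z, 1 <= a1 /\ 1 <= a2 /\
    exists s : nat, (m < s)%nat /\ walk alpha beta a1 a2 s = n.

Definition abt_cond (alpha beta n a b : Z) (t : nat) : Prop :=
  1 <= a /\ 1 <= b /\ (2 <= t)%nat /\
  n = a * gseq alpha beta t + beta * b * gseq alpha beta (t - 1) /\
  a <= (beta - 1) * gseq alpha beta (t + 1) + alpha * b /\
  b <= gseq alpha beta t /\
  (forall l : Z, 0 <= l ->
     ~ (exists m : Z, 0 < m /\ a - alpha * b - l * gseq alpha beta (t + 1) = m * beta)).

(* Main.v *)
Require Import Defs.
From Stdlib Require Import ZArith Znumtheory Lia.
Open Scope Z_scope.

Section H.
Variables alpha beta : Z.
Hypothesis Ha : 0 < alpha.
Hypothesis Hb : 0 < beta.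
Hypothesis Hab : Z.gcd alpha beta = 1.
Local Notation G := (gseq alpha beta).

Lemma gpos_aux k : 1 <= G (S k) /\ 0 <= G k.
Proof.
  induction k as [|k [IH1 IH2]].
  - split; [rewrite gseq_1; lia | unfold gseq; simpl; lia].
  - split; [rewrite gseq_SS; nia | lia].
Qed.
Lemma gpos k : 1 <= G (S k). Proof. apply gpos_aux. Qed.

Lemma gcopb k : Z.gcd beta (G (S k)) = 1.
Proof.
  induction k as [k IH] using (well_founded_induction lt_wf).
  destruct k as [|k].
  - rewrite gseq_1. apply Z.gcd_1_r.
  - destruct k as [|k].
    + rewrite gseq_2, Z.gcd_comm; exact Hab.
    + rewrite gseq_SS.
      replace (alpha * G (S (S k)) + beta * G (S k)) with
        (alpha * G (S (S k)) + G (S k) * beta) by ring.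
      rewrite Z.gcd_add_mult_diag_r.
      apply Zgcd_1_rel_prime. apply rel_prime_mult; apply Zgcd_1_rel_prime.
      * rewrite Z.gcd_comm; exact Hab.
      * apply IH; lia.
Qed.

Lemma gcons k : Z.gcd (G (S k)) (G (S (S k))) = 1.
Proof.
  induction k as [|k IH].
  - rewrite gseq_1. apply Z.gcd_1_l.
  - rewrite (gseq_SS _ _ (S k)).
    replace (alpha * G (S (S k)) + beta * G (S k)) with
      (beta * G (S k) + alpha * G (S (S k))) by ring.
    rewrite Z.gcd_add_mult_diag_r.
    apply Zgcd_1_rel_prime. apply rel_prime_mult; apply Zgcd_1_rel_prime.
    + rewrite Z.gcd_comm; apply gcopb.
    + rewrite Z.gcd_comm; exact IH.
Qed.

Definition P (n : Z) (k : nat) : Prop :=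
  exists x a, 1 <= x /\ 1 <= a /\ n = a * G (S k) + beta * x * G k.

Lemma P_down n k : P n (S k) -> P n k.
Proof.
  intros [x [a [Hx [Ha' E]]]].
  exists a, (alpha * a + beta * x). split; [lia|]. split; [nia|].
  rewrite E, gseq_SS. ring.
Qed.

Lemma P_down_iter n d k : P n (d + k) -> P n k.
Proof.
  induction d; simpl; auto. intro H; apply IHd, P_down, H.
Qed.

Lemma notP n a b T0 :
  1 <= b -> b <= G (S T0) ->
  n = a * G (S T0) + beta * b * G T0 ->
  (forall l : Z, 0 <= l ->
     ~ (exists m : Z, 0 < m /\ a - alpha * b - l * G (S (S T0)) = m * beta)) ->
  ~ P n (S T0).
Proof.
  intros Hb1 Hb2 En Hiii [x [a' [Hx [Ha1 E]]]].
  pose proof (gpos T0) as g1. pose proof (gpos (S T0)) as g2.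
  rewrite gseq_SS in E.
  assert (D : (G (S T0) | G (S (S T0)) * (a' - b))).
  { exists (a - alpha * b - beta * x). rewrite gseq_SS. nia. }
  apply Z.gauss in D; [| apply gcons].
  destruct D as [k Hk].
  assert (Hk0 : 0 <= k) by nia.
  apply (Hiii k Hk0). exists x. split; [lia|].
  assert (Z0 : G (S T0) * (a - alpha * b - k * G (S (S T0)) - x * beta) = 0).
  { rewrite gseq_SS. nia. }
  apply Z.mul_eq_0 in Z0. lia.
Qed.

End H.

Lemma walk_lin2 a b x0 x1 k :
  lin2 a b x0 x1 (S k) =
  (x1 * gseq a b (S k) + b * x0 * gseq a b k,
   x1 * gseq a b (S (S k)) + b * x0 * gseq a b (S k)).
Proof.
  induction k as [|k IH].
  - unfold gseq; simpl. f_equal; try ring.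
  - change (lin2 a b x0 x1 (S (S k))) with
      (let p := lin2 a b x0 x1 (S k) in (snd p, a * snd p + b * fst p)).
    rewrite IH. cbv zeta; cbn [fst snd]. rewrite (gseq_SS a b (S k)), (gseq_SS a b k). f_equal; ring.
Qed.

Theorem lemma3p2 (alpha beta : Z) (t : nat) :
  0 < alpha -> 0 < beta -> Z.gcd alpha beta = 1 -> (2 <= t)%nat ->
  let n_t := beta * gseq alpha beta t * gseq alpha beta (t + 1) in
  let a_t := (beta - 1) * gseq alpha beta (t + 1) + alpha * gseq alpha beta t in
  let b_t := gseq alpha beta t in
  s_gt alpha beta n_t 2 /\
  abt_cond alpha beta n_t a_t b_t t /\
  (forall (a b : Z) (t' : nat), abt_cond alpha beta n_t a b t' ->
     a = a_t /\ b = b_t /\ t' = t).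
Proof.
  intros Ha Hb Hab Ht n_t a_t b_t.
  destruct t as [|u]; [lia|].
  subst n_t a_t b_t.
  replace (S u + 1)%nat with (S (S u)) by lia.
  replace (S u - 1)%nat with u by lia.
  pose proof (gpos alpha beta Ha Hb u) as g1.
  pose proof (gpos alpha beta Ha Hb (S u)) as g2.
  pose proof (gseq_SS alpha beta u) as E2.
  assert (Hiii : forall l : Z, 0 <= l ->
     ~ (exists m : Z, 0 < m /\
        (beta - 1) * gseq alpha beta (S (S u)) + alpha * gseq alpha beta (S u)
          - alpha * gseq alpha beta (S u) - l * gseq alpha beta (S (S u)) = m * beta)).
  { intros l Hl [m [Hm Em]].
    assert (D : (beta | gseq alpha beta (S (S u)) * (beta - 1 - l))).
    { exists m. lia. }
    apply Z.gauss in D; [| apply (gcopb alpha beta Hab (S u))].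
    assert (0 < beta - 1 - l) by nia.
    apply Z.divide_pos_le in D; lia. }
  assert (En : beta * gseq alpha beta (S u) * gseq alpha beta (S (S u)) =
     ((beta - 1) * gseq alpha beta (S (S u)) + alpha * gseq alpha beta (S u))
       * gseq alpha beta (S u) + beta * gseq alpha beta (S u) * gseq alpha beta u).
  { rewrite E2. ring. }
  split; [|split].
  - exists (gseq alpha beta (S u)),
      ((beta - 1) * gseq alpha beta (S (S u)) + alpha * gseq alpha beta (S u)).
    split; [lia|]. split; [nia|].
    exists (S (S u)). split; [lia|].
    unfold walk. simpl Nat.pred. rewrite walk_lin2. simpl. rewrite En. ring.
  - unfold abt_cond.
    replace (S u + 1)%nat with (S (S u)) by lia.
    replace (S u - 1)%nat with u by lia.
    split; [nia|]. split; [lia|]. split; [lia|]. split; [exact En|].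
    split; [lia|]. split; [lia|]. exact Hiii.
  - intros a b t' [Ha1 [Hb1 [Ht' [Ena [Hale [Hble Hc]]]]]].
    destruct t' as [|T0]; [lia|].
    replace (S T0 + 1)%nat with (S (S T0)) in * by lia.
    replace (S T0 - 1)%nat with T0 in * by lia.
    set (n := beta * gseq alpha beta (S u) * gseq alpha beta (S (S u))) in *.
    assert (PT : P alpha beta n T0).
    { exists b, a. split; [lia|]. split; [lia|]. rewrite Ena. ring. }
    assert (nPT : ~ P alpha beta n (S T0)) by (eapply notP; eauto).
    assert (Pu : P alpha beta n u).
    { exists (gseq alpha beta (S u)),
      ((beta - 1) * gseq alpha beta (S (S u)) + alpha * gseq alpha beta (S u)).
      split; [lia|]. split; [nia|]. rewrite En. ring. }
    assert (nPu : ~ P alpha beta n (S u)).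
    { apply (notP alpha beta Ha Hb Hab n ((beta - 1) * gseq alpha beta (S (S u)) + alpha * gseq alpha beta (S u)) (gseq alpha beta (S u)) u); auto; lia. }
    assert (T0 = u).
    { destruct (Nat.lt_trichotomy T0 u) as [Hl|[He|Hl]]; auto.
      - exfalso; apply nPT. apply (P_down_iter alpha beta Ha Hb n (u - S T0)).
        replace (u - S T0 + S T0)%nat with u by lia. exact Pu.
      - exfalso; apply nPu. apply (P_down_iter alpha beta Ha Hb n (T0 - S u)).
        replace (T0 - S u + S u)%nat with T0 by lia. exact PT. }
    subst T0.
    assert (D : (gseq alpha beta (S u) | gseq alpha beta (S (S u)) * b)).
    { exists (beta * gseq alpha beta (S (S u)) - (a - alpha * b)).
      unfold n in Ena. rewrite E2 in Ena |- *. nia. }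
    apply Z.gauss in D; [| apply (gcons alpha beta Hab u)].
    destruct D as [j Hj].
    assert (j = 1) by nia. subst j.
    split; [|split; [lia|reflexivity]].
    assert (Z0 : gseq alpha beta (S u) *
       (a - ((beta - 1) * gseq alpha beta (S (S u)) + alpha * gseq alpha beta (S u))) = 0).
    { unfold n in Ena. rewrite E2 in Ena |- *. nia. }
    apply Z.mul_eq_0 in Z0. lia.
Qed.
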